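(* Let $G$, $k\ge 3$, the choice strings $c_{i,j}$, $L=k+1$ and $d=k-2$ be as in the construction in the context, and let $s$ be a string of length $L$ such that every choice string $c_{i,j}$ ($1\le i<j\le k$) has a substring of length $L$ at Hamming distance at most $d$ from $s$. Then the first $k$ characters of $s$ are encoding symbols $\sigma_{h_1},\dots,\sigma_{h_k}$, and the vertices $v_{h_1},\dots,v_{h_k}$ are $k$ vertices forming a clique in $G$.
   Context: Let $G=(V,E)$ be an undirected simple graph with $V=\{v_1,\dots,v_n\}$ and edge set $E=\{e_1,\dots,e_m\}$, and let $k\ge 3$ be an integer; put $N=\binom{k}{2}$. The alphabet consists of pairwise distinct symbols: encoding symbols $\sigma_1,\dots,\sigma_n$, string identification symbols $\varphi_1,\dots,\varphi_N$, and a synchronizing symbol $\#$. Order the pairs $(i,j)$ with $1\le i<j\le k$ lexicographically, $(1,2),(1,3),\dots,(1,k),(2,3),\dots,(k-1,k)$, and let $i'$ denote the position of $(i,j)$ in this order. For an edge $e$ joining $v_r$ and $v_s$ with $r<s$ define $\mathrm{block}(i,j,e)=\varphi_{i'}^{\,i-1}\,\sigma_r\,\varphi_{i'}^{\,j-i-1}\,\sigma_s\,\varphi_{i'}^{\,k-j}\,\#$ (a string of length $k+1$), and the choice string $c_{i,j}=\mathrm{block}(i,j,e_1)\,\varphi_{i'}^{\,k}\,\mathrm{block}(i,j,e_2)\,\varphi_{i'}^{\,k}\cdots\varphi_{i'}^{\,k}\,\mathrm{block}(i,j,e_m)$. Set $L=k+1$ and $d=k-2$. *)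

(* Defs.v *)
From mathcomp Require Import all_boot.
Set Implicit Arguments. Unset Strict Implicit. Unset Printing Implicit Defensive.

(* Symbols: encoding symbols sigma_r (r : 'I_n, 0-based: sigma_{r+1} in the
   paper), identification symbols phi_a (a : nat, 0-based: phi_{a+1}; only
   a < 'C(k,2) belong to the alphabet), and the synchronizing symbol #. *)
Definition sym (n : nat) := (('I_n + nat) + unit)%type.
Definition Sig {n} (r : 'I_n) : sym n := inl (inl r).
Definition Phi {n} (a : nat) : sym n := inl (inr a).
Definition Hash {n} : sym n := inr tt.

Definition in_alphabet (k : nat) {n} (x : sym n) : bool :=
  match x with
  | inl (inl _) => true
  | inl (inr a) => a < 'C(k, 2)
  | inr _ => true
  end.

Definition pair_pos (k i j : nat) : nat :=
  index (i, j) [seq p <- [seq (a, b) | a <- iota 0 k, b <- iota 0 k] | p.1 < p.2].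

(* block(i,j,e) with 0-based i < j < k; edge e = (v_r, v_s) with r < s. *)
Definition block (k : nat) {n} (i j : nat) (e : 'I_n * 'I_n) : seq (sym n) :=
  let f := Phi (pair_pos k i j) in
  nseq i f ++ [:: Sig e.1] ++ nseq (j - i - 1) f ++ [:: Sig e.2]
    ++ nseq (k - 1 - j) f ++ [:: Hash].

Definition choice_string (k : nat) {n} (E : seq ('I_n * 'I_n)) (i j : nat)
  : seq (sym n) :=
  match E with
  | [::] => [::]
  | e :: es => block k i j e ++
      flatten [seq nseq k (Phi (pair_pos k i j)) ++ block k i j e' | e' <- es]
  end.

(* Hamming distance (used on strings of equal length) *)
Definition hamming {T : eqType} (s t : seq T) : nat :=
  count (fun p => p.1 != p.2) (zip s t).

Definition has_close_substring {T : eqType} (c s : seq T) (L d : nat) : Prop :=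
  exists p, p + L <= size c /\ hamming (take L (drop p c)) s <= d.

Definition adj {n} (E : seq ('I_n * 'I_n)) (u v : 'I_n) : bool :=
  ((u, v) \in E) || ((v, u) \in E).

(* Main.v *)
Require Import Defs.
From mathcomp Require Import all_boot.
From mathcomp Require Import zify.
Set Implicit Arguments. Unset Strict Implicit.

Definition F {n} (k i j a : nat) (e : 'I_n * 'I_n) (o : nat) : sym n :=
  if o == i then Sig e.1 else if o == j then Sig e.2 else if o == k then Hash else Phi a.

Lemma nth_nseq_cons T (x0 f y : T) m r o :
  nth x0 (nseq m f ++ y :: r) o =
  if o < m then f else if o == m then y else nth x0 r (o - m.+1).
Proof.
rewrite nth_cat size_nseq; case: ltnP => h; first by rewrite nth_nseq h.
case E: (o - m) => [|d] /=.
  by have -> : o == m by lia.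
have -> : (o == m) = false by lia.
by have -> : o - m.+1 = d by lia.
Qed.

Lemma size_block k n i j (e : 'I_n * 'I_n) : i < j < k -> size (block k i j e) = k.+1.
Proof. move=> h; rewrite /block /= size_cat size_nseq /= size_cat size_nseq /= size_cat size_nseq /=; lia. Qed.

Lemma nth_block k n i j (e : 'I_n * 'I_n) o : i < j < k -> o <= k ->
  nth Hash (block k i j e) o = F k i j (pair_pos k i j) e o.
Proof.
move=> h ho; rewrite /block /= !nth_nseq_cons /F.
repeat case: ifP => ?; try (exfalso; lia); try done.
Qed.

Definition T k n i j (e : 'I_n * 'I_n) es :=
  block k i j e ++ flatten [seq nseq k (Phi (pair_pos k i j)) ++ block k i j e' | e' <- es].

Lemma nth_T k n i j (es : seq ('I_n * 'I_n)) : i < j < k -> forall e x,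
  x < size (T k i j e es) ->
  x %/ (2*k+1) < size (e :: es) /\ nth Hash (T k i j e es) x = F k i j (pair_pos k i j) (nth e (e :: es) (x %/ (2*k+1))) (x %% (2*k+1)).
Proof.
move=> hij; elim: es => [|e' es IH] e x.
  rewrite /T /= cats0 size_block // => hx.
  rewrite divn_small ?modn_small; try lia.
  by split => //; rewrite nth_block //; lia.
rewrite /T /= -catA -/(T k i j e' es) => hx.
have Hd : 0 < 2*k+1 by lia.
rewrite nth_cat size_block //.
case: (ltnP x k.+1) => h1.
  rewrite divn_small ?modn_small; try lia.
  by split => //; rewrite nth_block //=; lia.
rewrite nth_cat size_nseq.
case: (ltnP (x - k.+1) k) => h2.
  rewrite divn_small ?modn_small; try lia.
  rewrite nth_nseq h2 /F.
  split => //.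
  repeat case: ifP => ?; try (exfalso; lia); try done.
have hx' : x - k.+1 - k < size (T k i j e' es).
  move: hx; rewrite size_cat size_block // size_cat size_nseq; lia.
have [IH1 IH2] := IH e' _ hx'.
have Ex : x = 1 * (2*k+1) + (x - k.+1 - k) by lia.
have [D1 D2] : x %/ (2*k+1) = 1 + (x - k.+1 - k) %/ (2*k+1) /\ x %% (2*k+1) = (x - k.+1 - k) %% (2*k+1).
  by rewrite {1 3}Ex divnMDl // modnMDl.
rewrite D1 D2.
split; first by move: IH1; rewrite /=; move: (_ %/ _) => d; lia.
rewrite IH2 /=; congr F.
by apply: set_nth_default.
Qed.

Lemma divmod_eq b o P : o < P -> (b * P + o) %/ P = b /\ (b * P + o) %% P = o.
Proof.
move=> h; have hP : 0 < P by lia.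
by rewrite divnMDl // modnMDl divn_small // modn_small // addn0.
Qed.

Lemma nth_T2 k n i j (es : seq ('I_n * 'I_n)) e b o : i < j < k -> o < 2*k+1 ->
  b * (2*k+1) + o < size (T k i j e es) ->
  b < size (e :: es) /\
  nth Hash (T k i j e es) (b * (2*k+1) + o) = F k i j (pair_pos k i j) (nth e (e :: es) b) o.
Proof.
move=> hij ho hx; have [h1 h2] := nth_T hij hx.
by move: h1 h2; have [-> ->] := divmod_eq b ho.
Qed.

Lemma F_nonphi n k i j a (e : 'I_n * 'I_n) o : F k i j a e o != Phi a -> (o == i) || (o == j) || (o == k).
Proof. rewrite /F; by repeat case: ifP => ?; rewrite ?eqxx ?orbT. Qed.

Lemma count_nth T (x0 : T) (P : pred T) s :
  count P s = count (fun q => P (nth x0 s q)) (iota 0 (size s)).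
Proof. by rewrite -{1}(mkseq_nth x0 s) /mkseq count_map. Qed.

Lemma count_sub_size (T : eqType) (P : pred T) l X :
  uniq l -> (forall q, q \in l -> P q -> q \in X) -> count P l <= size X.
Proof.
move=> hu hs; rewrite -size_filter; apply: uniq_leq_size; first exact: filter_uniq.
by move=> q; rewrite mem_filter => /andP[hp hq]; apply: hs.
Qed.

Lemma matches3 n k (c s : seq (sym n)) : 2 <= k -> size s = k.+1 ->
  has_close_substring c s k.+1 (k - 2) ->
  exists p0, p0 + k.+1 <= size c /\
    3 <= count (fun q => nth Hash c (p0 + q) == nth Hash s q) (iota 0 k.+1).
Proof.
move=> hk hs [p0 [hsz hh]]; exists p0; split => //.
set w := take k.+1 (drop p0 c).
have {}hsz : p0 + k.+1 <= @size (sym n) c := hsz.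
have hw : size w = k.+1 by rewrite size_take size_drop; case: (ltnP k.+1 (size c - p0)) => h; lia.
move: hh; rewrite /hamming.
rewrite -(mkseq_nth (Hash, Hash) (zip w s)) /mkseq count_map size_zip hw hs minnn.
rewrite (@eq_in_count _ _ (predC (fun q => nth Hash c (p0 + q) == nth Hash s q))); last first.
  move=> q; rewrite mem_iota => /andP[_ hq] /=.
  by rewrite nth_zip ?hw ?hs //= nth_take // nth_drop.
move=> h.
have {}h : @count nat (predC (fun q => nth Hash c (p0 + q) == nth Hash s q)) (iota 0 k.+1) <= k - 2 := h.
have := count_predC (fun q => nth Hash c (p0 + q) == nth Hash s q) (iota 0 k.+1).
rewrite size_iota; lia.
Qed.

Definition isPhi {n} (x : sym n) : bool := if x is inl (inr _) then true else false.
Definition isSig {n} (x : sym n) : bool := if x is inl (inl _) then true else false.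

Lemma c_phi k n i j (E : seq ('I_n * 'I_n)) x : i < j < k ->
  isPhi (nth Hash (choice_string k E i j) x) -> nth Hash (choice_string k E i j) x = Phi (pair_pos k i j).
Proof.
move=> hij; case: (ltnP x (size (choice_string k E i j))) => hx; last by rewrite nth_default.
case: E hx => [|e0 es] //= hx.
have [_ ->] := nth_T hij hx.
by rewrite /F; repeat case: ifP.
Qed.

Lemma W1 n k i j (E : seq ('I_n * 'I_n)) (s : seq (sym n)) : 2 <= k -> i < j < k -> size s = k.+1 ->
  has_close_substring (choice_string k E i j) s k.+1 (k - 2) ->
  3 <= count (pred1 (Phi (pair_pos k i j))) s + count (predC isPhi) s.
Proof.
move=> hk hij hs hc; have [p0 [hsz M3]] := matches3 hk hs hc.
rewrite (count_nth Hash (pred1 _)) (count_nth Hash (predC _)) hs.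
set A := (fun q => _ == Phi _) in M3 *.
set B := (fun q => predC isPhi _).
have U := count_predUI A B (iota 0 k.+1).
have S : count (fun q => nth Hash (choice_string k E i j) (p0 + q) == nth Hash s q) (iota 0 k.+1)
   <= count (predU A B) (iota 0 k.+1).
  apply: sub_count => q /= /eqP hq; rewrite /A /B /= -hq.
  case hp: (isPhi (nth Hash (choice_string k E i j) (p0 + q))).
    by rewrite (c_phi hij hp) eqxx.
  by rewrite orbT.
lia.
Qed.

Lemma W2 n k i j (E : seq ('I_n * 'I_n)) (s : seq (sym n)) : 2 <= k -> i < j < k -> size s = k.+1 ->
  has_close_substring (choice_string k E i j) s k.+1 (k - 2) ->
  (forall q, nth Hash s q != Phi (pair_pos k i j)) ->
  exists p e, [/\ p <= i, e \in E, nth Hash s (i - p) = Sig e.1,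
     nth Hash s (j - p) = Sig e.2 & nth Hash s (k - p) = Hash].
Proof.
move=> hk hij hs hc hnp; have [p0 [hsz M3]] := matches3 hk hs hc.
case: E hc hsz M3 => [|e0 es] hc hsz M3; first by move: hsz; rewrite /=; lia.
move: hsz M3; rewrite -[choice_string k (e0 :: es) i j]/(T k i j e0 es) => hsz M3.
set P := 2 * k + 1 in M3 hsz.
set b := p0 %/ P; set r := p0 %% P.
have hr : r < P by rewrite ltn_pmod //; lia.
have Ep0 : p0 = b * P + r by rewrite /b /r -divn_eq.
set M := (fun q => _) in M3.
have key : forall q, q <= k -> M q ->
   (r + q < P /\ ((r + q == i) || (r + q == j) || (r + q == k))) \/
   (P <= r + q /\ ((r + q - P == i) || (r + q - P == j) || (r + q - P == k))).
  move=> q hq; rewrite /M => /eqP hm.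
  have hne : nth Hash (T k i j e0 es) (p0 + q) != Phi (pair_pos k i j) by rewrite hm.
  case: (ltnP (r + q) P) => h.
    left; split => //.
    have Ex : p0 + q = b * P + (r + q) by rewrite Ep0; lia.
    rewrite Ex in hne; have hlt : b * P + (r + q) < size (T k i j e0 es) by rewrite -Ex; lia.
    have [_ E2] := nth_T2 hij h hlt.
    by rewrite E2 in hne; apply: F_nonphi hne.
  right; split => //.
  have h' : r + q - P < 2 * k + 1 by lia.
  have Ex : p0 + q = b.+1 * P + (r + q - P) by rewrite Ep0 mulSn; lia.
  rewrite Ex in hne; have hlt : b.+1 * P + (r + q - P) < size (T k i j e0 es) by rewrite -Ex; lia.
  have [_ E2] := nth_T2 hij h' hlt.
  by rewrite E2 in hne; apply: F_nonphi hne.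
have hiota : forall q, q \in iota 0 k.+1 -> q <= k by move=> q; rewrite mem_iota; lia.
case: (leqP r i) => hri; last first.
  exfalso.
  case: (leqP r k) => hrk.
    have : count M (iota 0 k.+1) <= 2.
      apply: (count_sub_size (X := [:: j - r; k - r])); first exact: iota_uniq.
      move=> q /hiota hq /(key q hq); rewrite !inE; lia.
    lia.
  have : count M (iota 0 k.+1) <= 2.
    apply: (count_sub_size (X := [:: P + i - r; P + j - r])); first exact: iota_uniq.
    move=> q /hiota hq /(key q hq); rewrite !inE; lia.
  lia.
have allM : M (i - r) /\ M (j - r) /\ M (k - r).
  have hX : forall q, q \in iota 0 k.+1 -> M q -> q \in [:: i - r; j - r; k - r].
    move=> q /hiota hq /(key q hq); rewrite !inE; lia.
  split; [|split]; apply/negPn/negP => hn.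
  - have : count M (iota 0 k.+1) <= 2.
      apply: (count_sub_size (X := [:: j - r; k - r])); first exact: iota_uniq.
      move=> q hq hm; have := hX q hq hm; rewrite !inE.
      case/orP => [/eqP E1|//]; by move: hm; rewrite E1 (negbTE hn).
    lia.
  - have : count M (iota 0 k.+1) <= 2.
      apply: (count_sub_size (X := [:: i - r; k - r])); first exact: iota_uniq.
      move=> q hq hm; have := hX q hq hm; rewrite !inE.
      case/or3P => [->//|/eqP E1|->]; last by rewrite orbT.
      by move: hm; rewrite E1 (negbTE hn).
    lia.
  - have : count M (iota 0 k.+1) <= 2.
      apply: (count_sub_size (X := [:: i - r; j - r])); first exact: iota_uniq.
      move=> q hq hm; have := hX q hq hm; rewrite !inE.
      case/or3P => [->//|->|/eqP E1]; first by rewrite orbT.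
      by move: hm; rewrite E1 (negbTE hn).
    lia.
have val : forall o, i <= o <= k -> b < size (e0 :: es) /\
    nth Hash (T k i j e0 es) (p0 + (o - r)) = F k i j (pair_pos k i j) (nth e0 (e0 :: es) b) o.
  move=> o ho.
  have Ex : p0 + (o - r) = b * P + o by rewrite Ep0; lia.
  rewrite Ex; apply: nth_T2 => //; first lia.
  rewrite -Ex; lia.
have hb1 : i <= i <= k by lia.
have hb2 : i <= j <= k by lia.
have hb3 : i <= k <= k by lia.
have [hb V1] := val i hb1.
have [_ V2] := val j hb2.
have [_ V3] := val k hb3.
case: allM => /eqP M1 [/eqP M2 /eqP M3'].
exists r, (nth e0 (e0 :: es) b); split => //.
- by rewrite mem_nth.
- by rewrite -M1 V1 /F eqxx.
- have ji : (j == i) = false by lia.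
  by rewrite -M2 V2 /F ji eqxx.
- have ki : (k == i) = false by lia.
  have kj : (k == j) = false by lia.
  by rewrite -M3' V3 /F ki kj eqxx.
Qed.

Lemma pp_inj k i j i' j' : i < j < k -> i' < j' < k ->
  pair_pos k i j = pair_pos k i' j' -> (i, j) = (i', j').
Proof.
set PL := [seq p <- [seq (a, b) | a <- iota 0 k, b <- iota 0 k] | p.1 < p.2].
have mem : forall a b, a < b < k -> (a, b) \in PL.
  move=> a b hab; rewrite mem_filter /=; apply/andP; split; first lia.
  apply: (allpairs_f pair); rewrite mem_iota; lia.
move=> h1 h2 he.
rewrite -(nth_index (0,0) (mem _ _ h1)) -(nth_index (0,0) (mem _ _ h2)).
by rewrite /pair_pos -/PL in he; rewrite he.
Qed.

Lemma Phi_inj n : injective (@Phi n).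
Proof. by move=> a b []. Qed.

Lemma sum_phi n (s : seq (sym n)) la : uniq la ->
  sumn [seq count (pred1 (Phi a)) s | a <- la] = count (fun x => x \in map Phi la) s.
Proof.
elim: la => [|a la IH] /=; first by rewrite count_pred0.
case/andP => ha hu; rewrite IH //.
have H0 : count (predI (pred1 (Phi a)) (fun x => x \in map Phi la)) s = 0.
  rewrite (eq_count (a2 := pred0)) ?count_pred0 // => x /=.
  case: eqP => //= ->; rewrite (mem_map (@Phi_inj n)); exact/negbTE.
have := count_predUI (pred1 (Phi a)) (fun x => x \in map Phi la) s.
rewrite H0 addn0 => <-; apply: eq_count => x /=; by rewrite inE.
Qed.

Lemma sumn_lb (A : eqType) (f : A -> nat) m (l : seq A) : (forall p, p \in l -> m <= f p) -> m * size l <= sumn (map f l).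
Proof.
elim: l => [|x l IH] h /=; first by rewrite muln0.
have := h x (mem_head _ _); have := IH (fun p hp => h p (mem_behead (s := x :: l) hp)). 
rewrite mulnS; lia.
Qed.

Lemma count_lt A (P Q : pred A) l : (forall x, P x -> Q x) -> has (predI Q (predC P)) l ->
  count P l < count Q l.
Proof.
move=> hPQ; elim: l => [|x l IH] //= /orP[/andP[hq hp]|hh].
  rewrite hq (negbTE hp) /= add0n add1n ltnS; exact: sub_count.
have := IH hh; case hpx: (P x); first by rewrite (hPQ _ hpx).
case: (Q x) => /=; lia.
Qed.

Lemma cnt0 n (s : seq (sym n)) a : count (pred1 (Phi a)) s = 0 -> forall q, nth Hash s q != Phi a.
Proof.
move=> h q; case: (ltnP q (size s)) => hq; last by rewrite nth_default.
apply/negP => /eqP he.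
have : Phi a \in s by rewrite -he mem_nth.
by rewrite -has_pred1 has_count h.
Qed.

Theorem proposition2 (n k : nat) (E : seq ('I_n * 'I_n)) (s : seq (sym n)) :
  uniq E ->
  (forall e, e \in E -> e.1 < e.2) ->
  3 <= k ->
  size s = k.+1 ->
  all (in_alphabet k) s ->
  (forall i j : nat, i < j < k ->
     has_close_substring (choice_string k E i j) s k.+1 (k - 2)) ->
  exists h : 'I_k -> 'I_n,
    (forall t : 'I_k, nth Hash s t = Sig (h t)) /\
    (forall a b : 'I_k, a != b -> adj E (h a) (h b)).
Proof.
move=> _ _ hk hs _ hcs.
have hk2 : 2 <= k by lia.
set c := fun p : nat * nat => count (pred1 (Phi (pair_pos k p.1 p.2))) s.
set nP := count isPhi s.
have hnPk : nP <= k.+1 by rewrite /nP -hs count_size.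
have hnP : count (predC isPhi) s = k.+1 - nP.
  have := count_predC isPhi s; rewrite hs /nP; lia.
have hW1 : forall i j, i < j < k -> 3 <= c (i, j) + (k.+1 - nP).
  by move=> i j hij; rewrite -hnP; apply: W1 => //; apply: hcs.
have hW2 : forall i j, i < j < k -> c (i, j) = 0 ->
    exists p e, [/\ p <= i, e \in E, nth Hash s (i - p) = Sig e.1,
     nth Hash s (j - p) = Sig e.2 & nth Hash s (k - p) = Hash].
  move=> i j hij h0; apply: W2 => //; first exact: hcs.
  exact: cnt0.
have SUM : forall l, (forall p, p \in l -> p.1 < p.2 < k) -> uniq l -> sumn (map c l) <= nP.
  move=> l hv hu.
  have -> : map c l = [seq count (pred1 (Phi a)) s | a <- map (fun p => pair_pos k p.1 p.2) l].
    by rewrite -map_comp.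
  rewrite sum_phi; last first.
    rewrite map_inj_in_uniq // => [[a b] [a' b']] ha hb /= he.
    exact: pp_inj (hv _ ha) (hv _ hb) he.
  apply: sub_count => x /= /mapP[a _ ->]; done.
set l0 := [seq (0, t) | t <- iota 1 (k - 1)].
have l0v : forall p, p \in l0 -> p.1 < p.2 < k.
  by move=> p /mapP[t]; rewrite mem_iota => ht ->; rewrite /=; lia.
have l0u : uniq l0 by rewrite map_inj_uniq ?iota_uniq // => a b [].
case: (boolP (has (fun t => c (0, t) == 0) (iota 1 (k - 1)))) => hA; last first.
  exfalso.
  have h1 : 1 * size l0 <= sumn (map c l0).
    apply: sumn_lb => p /mapP[t ht ->].
    have := hasPn hA t ht; rewrite /=; lia.
  have := SUM l0 l0v l0u; rewrite size_map size_iota in h1 => h2.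
  set l := l0 ++ [:: (1, 2)].
  have lv : forall p, p \in l -> p.1 < p.2 < k.
    by move=> p; rewrite mem_cat inE => /orP[/l0v //|/eqP ->]; rewrite /=; lia.
  have lu : uniq l.
    rewrite cat_uniq l0u /= andbT /l0 orbF; apply/negP => /mapP[t _ []] //.
  have h3 : (nP + 2 - k) * size l <= sumn (map c l).
    apply: sumn_lb => p hp.
    have : 3 <= c p + (k.+1 - nP) := hW1 p.1 p.2 (lv p hp).
    lia.
  have h4 := SUM l lv lu.
  have hsl : size l = k by rewrite /l size_cat size_map size_iota /=; lia.
  rewrite hsl in h3.
  nia.
case/hasP: hA => t0; rewrite mem_iota => ht0 /eqP ht0c.
have ht0' : 0 < t0 < k by lia.
have [p [e [hp _ hs0 _ hsk]]] := hW2 0 t0 ht0' ht0c.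
have p0 : p = 0 by lia.
subst p; rewrite subn0 in hs0; rewrite subn0 in hsk.
set T := [seq t <- iota 1 (k - 1) | ~~ isSig (nth Hash s t)].
have Tv : forall t, t \in T -> 1 <= c (0, t).
  move=> t; rewrite mem_filter mem_iota => /andP[hn ht].
  case: (posnP (c (0, t))) => // h0.
  have ht' : 0 < t < k by lia.
  have [p' [e' [hp' _ _ hs' _]]] := hW2 0 t ht' h0.
  have p0' : p' = 0 by lia.
  by rewrite p0' subn0 in hs'; rewrite hs' in hn.
have iotaE : iota 0 k.+1 = 0 :: iota 1 (k - 1) ++ [:: k].
  have -> : k.+1 = 1 + (k - 1) + 1 by lia.
  by rewrite !iotaD /= add0n; have -> : 1 + (k - 1) = k by lia.
have nPE : nP = count (fun q => isPhi (nth Hash s q)) (iota 1 (k - 1)).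
  rewrite /nP (count_nth Hash) hs iotaE /= count_cat /= hs0 hsk /=; lia.
have nPT : nP <= size T.
  rewrite nPE size_filter; apply: sub_count => q /=; by case: (nth Hash s q) => [[]|].
have nPTs : forall t, 1 <= t < k -> nth Hash s t = Hash -> nP < size T.
  move=> t ht hh; rewrite nPE size_filter; apply: count_lt.
    by move=> q /=; case: (nth Hash s q) => [[]|].
  apply/hasP; exists t; first by rewrite mem_iota; lia.
  by rewrite /= hh.
set l1 := [seq (0, t) | t <- T].
have l1v : forall p, p \in l1 -> p.1 < p.2 < k.
  move=> p /mapP[t]; rewrite mem_filter mem_iota => /andP[_ ht] ->; rewrite /=; lia.
have l1u : uniq l1 by rewrite map_inj_uniq ?filter_uniq ?iota_uniq // => a b [].
have l1lb : size T <= sumn (map c l1).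
  have := sumn_lb (m := 1) (f := c) (l := l1); rewrite size_map mul1n; apply.
  by move=> p /mapP[t ht ->]; apply: Tv.
have l1ub := SUM l1 l1v l1u.
have hi1 : forall i j, 1 <= i -> i < j < k -> isSig (nth Hash s i) && isSig (nth Hash s j).
  move=> i j hi hij.
  have l2v : forall p, p \in l1 ++ [:: (i, j)] -> p.1 < p.2 < k.
    by move=> p; rewrite mem_cat inE => /orP[/l1v //|/eqP ->].
  have l2u : uniq (l1 ++ [:: (i, j)]).
    rewrite cat_uniq l1u /= andbT orbF /l1; apply/negP => /mapP[t _ []]; lia.
  have := SUM _ l2v l2u; rewrite map_cat sumn_cat /= addn0 => h.
  have hc0 : c (i, j) = 0 by lia.
  have [p' [e' [hp' _ hsi hsj hsk']]] := hW2 i j hij hc0.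
  case: (posnP p') => hp0; last first.
    have hkp : 1 <= k - p' < k by lia.
    have := nPTs (k - p') hkp hsk'; lia.
  by rewrite hp0 !subn0 in hsi hsj; rewrite hsi hsj.
have allS : forall t, t < k -> isSig (nth Hash s t).
  move=> t ht; case: t ht => [|t] ht; first by rewrite hs0.
  case: t ht => [|t] ht.
    have h12 : 1 < 2 < k by lia.
    by case/andP: (hi1 1 2 (leqnn 1) h12).
  have h12 : 1 < t.+2 < k by lia.
  by case/andP: (hi1 1 t.+2 (leqnn 1) h12).
have nP0 : nP = 0.
  rewrite /nP (count_nth Hash) hs (eq_in_count (a2 := pred0)) ?count_pred0 //.
  move=> q; rewrite mem_iota => /andP[_ hq] /=.
  case: (ltnP q k) => hq1; first by move: (allS q hq1); case: (nth Hash s q) => [[]|].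
  have -> : q = k by lia.
  by rewrite hsk.
have hadj : forall i j, i < j < k -> exists e, [/\ e \in E, nth Hash s i = Sig e.1 & nth Hash s j = Sig e.2].
  move=> i j hij.
  have hc : c (i, j) = 0.
    apply/eqP; rewrite -leqn0 -nP0; apply: sub_count => x /= /eqP ->; done.
  have [p' [e' [hp' he' hsi hsj hsk']]] := hW2 i j hij hc.
  case: (posnP p') => hp0; last first.
    have hkp : k - p' < k by lia.
    by have := allS (k - p') hkp; rewrite hsk'.
  by exists e'; rewrite hp0 !subn0 in hsi hsj.
exists (fun t : 'I_k => if nth Hash s t is inl (inl r) then r else e.1).
split.
  move=> t; move: (allS t (ltn_ord t)); by case: (nth Hash s t) => [[]|].
have hv : forall t : 'I_k, nth Hash s t = Sig (if nth Hash s t is inl (inl r) then r else e.1).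
  move=> t; move: (allS t (ltn_ord t)); by case: (nth Hash s t) => [[]|].
move=> a b hab; rewrite /adj.
case: (ltngtP a b) => hlt; last by move: hab; rewrite (val_inj hlt) eqxx.
  have hab' : a < b < k by rewrite hlt ltn_ord.
  have [e' [he' ha hb]] := hadj a b hab'.
  by rewrite ha hb /= -surjective_pairing he'.
have hab' : b < a < k by rewrite hlt ltn_ord.
have [e' [he' ha hb]] := hadj b a hab'.
by rewrite ha hb /= -surjective_pairing he' orbT.
Qed.
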